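(* Let $\mathbb{K}$ be a Cantor complete ordered field. Then for every valuation $v$ on $\mathbb{K}$, the metric space $(\mathbb{K},d)$, where $d(a,b)=e^{-v(a-b)}$ is the valuation metric, is spherically complete.
   Context: An ordered field is Cantor complete if every nested (decreasing) sequence of closed intervals $[a_n,b_n]$ has nonempty intersection. A metric space is spherically complete if every nested (decreasing) sequence of closed balls has nonempty intersection. A valuation on an ordered field $\mathbb{K}$ is a map $v:\mathbb{K}\to\mathbb{R}\cup\{\infty\}$ such that for all $x,y$: $v(x)=\infty$ iff $x=0$; $v(xy)=v(x)+v(y)$; $v(x+y)\ge\min\{v(x),v(y)\}$; and $|x|<|y|$ implies $v(x)\ge v(y)$ (with $r\le\infty$, $r+\infty=\infty$). The valuation metric is $d(a,b)=e^{-v(a-b)}$, with $e^{-\infty}=0$. *)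

(* Defs.v *)
From HB Require Import structures.
From mathcomp Require Import all_boot all_order all_algebra.
From mathcomp Require Import all_classical all_reals all_analysis.
Set Implicit Arguments. Unset Strict Implicit. Unset Printing Implicit Defensive.
Import Order.TTheory GRing.Theory Num.Theory.
Local Open Scope ring_scope.
Local Open Scope classical_set_scope.

(* An ordered field is a MathComp realFieldType. *)

Definition cantor_complete (K : realFieldType) : Prop :=
  forall a b : nat -> K,
    (forall n, a n <= b n) ->
    (forall n, `[a n.+1, b n.+1] `<=` `[a n, b n]) ->
    \bigcap_n `[a n, b n] !=set0.

(* A valuation v : K -> R ∪ {∞}, with R the real numbers (any realType),
   represented in the extended reals \bar R with the value -oo excluded. *)
Definition is_valuation (K : realFieldType) (R : realType) (v : K -> \bar R) : Prop :=
  [/\ (forall x, v x <> -oo%E),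
      (forall x, v x = +oo%E <-> x = 0),
      (forall x y, v (x * y) = (v x + v y)%E),
      (forall x y, (Order.min (v x) (v y) <= v (x + y)%R)%E)
    & (forall x y, `|x| < `|y| -> (v y <= v x)%E)].

Definition vdist (K : realFieldType) (R : realType) (v : K -> \bar R) (a b : K) : R :=
  match v (a - b) with
  | EFin r => expR (- r)
  | _ => 0
  end.

Definition vcball (K : realFieldType) (R : realType) (v : K -> \bar R) (c : K) (r : R) : set K :=
  [set x | vdist v x c <= r].

Definition spherically_complete (K : realFieldType) (R : realType) (v : K -> \bar R) : Prop :=
  forall (c : nat -> K) (r : nat -> R),
    (forall n, 0 <= r n) ->
    (forall n, vcball v (c n.+1) (r n.+1) `<=` vcball v (c n) (r n)) ->
    \bigcap_n vcball v (c n) (r n) !=set0.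

(* Main.v *)
Require Import Defs.
From mathcomp Require Import all_boot all_order all_algebra.
From mathcomp Require Import all_classical all_reals all_analysis.
From mathcomp Require Import lra.
Require Stdlib.Logic.Classical_Prop.
Import Order.TTheory GRing.Theory Num.Theory.
Local Open Scope ring_scope.
Local Open Scope classical_set_scope.

Section Aux.
Variables (K : realFieldType) (R : realType) (v : K -> \bar R).
Hypothesis hv : is_valuation v.

Lemma itv_cc (a b x : K) : `[a, b] x <-> a <= x <= b.
Proof. by rewrite /= in_itv. Qed.

Definition phi (e : \bar R) : R := match e with EFin r => expR (- r) | _ => 0 end.

Lemma vdistE a b : vdist v a b = phi (v (a - b)).
Proof. by []. Qed.

Lemma phi_ge0 e : 0 <= phi e.
Proof. by case: e => [r| |] //=; exact: expR_ge0. Qed.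

Lemma phi_anti e1 e2 : e1 <> -oo%E -> (e1 <= e2)%E -> phi e2 <= phi e1.
Proof.
case: e2 => [r2| |] /=.
- case: e1 => [r1| |] //= _; rewrite lee_fin => h.
  by rewrite ler_expR lerN2.
- move=> _ _; exact: phi_ge0.
- by case: e1.
Qed.

Lemma v_fin x : x != 0 -> exists r, v x = r%:E.
Proof.
case: hv => hn h0 _ _ _ xn0.
case E: (v x) => [r| |]; first by exists r.
- by move/h0: E => /eqP; rewrite (negbTE xn0).
- by have := hn x; rewrite E.
Qed.

Lemma v1 : v 1 = 0%E.
Proof.
case: hv => _ _ hm _ _.
have [r hr] := v_fin 1 (oner_neq0 K).
have := hm 1 1; rewrite mulr1 hr -EFinD => /eqP; rewrite eqe => /eqP h.
by congr EFin; lra.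
Qed.

Lemma vN x : v (- x) = v x.
Proof.
case: hv => _ _ hm _ _.
have hN1 : v (-1) = 0%E.
  have [r hr] : exists r, v (-1) = r%:E by apply: v_fin; rewrite oppr_eq0 oner_neq0.
  have := hm (-1) (-1); rewrite mulrNN mulr1 v1 hr -EFinD => /eqP; rewrite eqe => /eqP h.
  by congr EFin; lra.
by rewrite -mulN1r hm hN1 add0e.
Qed.

Lemma vdist_sym a b : vdist v a b = vdist v b a.
Proof. by rewrite !vdistE -opprB vN. Qed.

Lemma vdist_self a : vdist v a a = 0.
Proof. case: hv => _ h0 _ _ _. by rewrite vdistE subrr (proj2 (h0 0)). Qed.

Lemma vdist_ge0 a b : 0 <= vdist v a b.
Proof. exact: phi_ge0. Qed.

Lemma vdist_ultra a b c r :
  vdist v a b <= r -> vdist v b c <= r -> vdist v a c <= r.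
Proof.
case: hv => hn _ _ hu _ h1 h2.
have e : a - c = (a - b) + (b - c) by rewrite addrA subrK.
rewrite vdistE e; rewrite !vdistE in h1 h2.
have hmin := hu (a - b) (b - c).
have [hle|hlt] := leP (v (a - b)) (v (b - c)).
- rewrite (min_l hle) in hmin.
  exact: le_trans (phi_anti _ _ (hn _) hmin) h1.
- rewrite (min_r (ltW hlt)) in hmin.
  exact: le_trans (phi_anti _ _ (hn _) hmin) h2.
Qed.

Lemma v_norm_anti y z : `|y| <= `|z| -> (v z <= v y)%E.
Proof.
case: hv => _ _ _ _ ha.
rewrite le_eqVlt => /orP [/eqP e|]; last exact: ha.
have : (`|y| == `|z|) by rewrite e.
by rewrite eqr_norm2 => /orP [/eqP ->|/eqP ->]; rewrite ?vN.
Qed.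

Lemma vdist_norm x y c : `|x - c| <= `|y - c| -> vdist v x c <= vdist v y c.
Proof.
case: hv => hn _ _ _ _ h.
rewrite !vdistE; apply: phi_anti => //; exact: v_norm_anti.
Qed.

Lemma convex a b x c r : a <= x -> x <= b ->
  vdist v a c <= r -> vdist v b c <= r -> vdist v x c <= r.
Proof.
move=> hax hxb ha hb.
have [hcx|hxc] := leP c x.
- apply: le_trans hb; apply: vdist_norm.
  rewrite !ger0_norm; [lra|lra|lra].
- apply: le_trans ha; apply: vdist_norm.
  rewrite !ler0_norm; [lra|lra|lra].
Qed.

Lemma interval_between c0 r0 c1 r1 p :
  0 <= r1 ->
  vcball v c1 r1 `<=` vcball v c0 r0 ->
  vcball v c0 r0 p -> ~ vcball v c1 r1 p ->
  exists a b, a <= b /\ vcball v c1 r1 `<=` [set x | a <= x <= b] /\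
    (forall x, a <= x <= b -> vcball v c0 r0 x).
Proof.
rewrite /vcball /= => r1ge0 sub hp hnp.
set c := c1.
have hc1 : vdist v c c1 <= r1 by rewrite vdist_self.
have hc0 : vdist v c c0 <= r0 by exact: sub.
set q := c + (c - p).
have hqd : vdist v q c = vdist v p c.
  rewrite !vdistE (_ : q - c = - (p - c)); first by rewrite vN.
  by rewrite /q opprB addrAC subrr add0r.
have hq0 : vdist v q c0 <= r0.
  apply: (vdist_ultra _ c _ _ _ hc0); rewrite hqd.
  apply: (vdist_ultra _ c0 _ _ hp); by rewrite vdist_sym.
have hnq : ~ vdist v q c1 <= r1 by rewrite hqd.
have nb : forall y t, vdist v y c1 <= r1 -> ~ vdist v t c1 <= r1 ->
    ~ ((y <= t /\ t <= c) \/ (c <= t /\ t <= y)).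
  move=> y t hy ht [[h1 h2]|[h1 h2]]; apply: ht.
  - exact: convex h1 h2 hy hc1.
  - exact: convex h1 h2 hc1 hy.
have [hpc|hcp] := leP p c.
- exists p, q; split; first by rewrite /q; lra.
  split.
  + move=> y hy /=; apply/andP; split.
    * rewrite leNgt; apply/negP => hyp; apply: (nb y p hy hnp); left; split => //.
      exact: ltW.
    * rewrite leNgt; apply/negP => hyq; apply: (nb y q hy hnq); right; split.
      -- rewrite /q; lra.
      -- exact: ltW.
  + by move=> x /andP [h1 h2]; exact: convex h1 h2 hp hq0.
- exists q, p; split; first by rewrite /q; lra.
  split.
  + move=> y hy /=; apply/andP; split.
    * rewrite leNgt; apply/negP => hyq; apply: (nb y q hy hnq); left; split.
      -- exact: ltW.
      -- rewrite /q; lra.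
    * rewrite leNgt; apply/negP => hyp; apply: (nb y p hy hnp); right; split => //.
      -- exact: ltW.
      -- exact: ltW.
  + by move=> x /andP [h1 h2]; exact: convex h1 h2 hq0 hp.
Qed.

End Aux.

Theorem theorem2p6 (K : realFieldType) (R : realType) :
  cantor_complete K ->
  forall v : K -> \bar R, is_valuation v -> spherically_complete v.
Proof.
move=> hK v hv c r r0 nest.
set B := fun n => vcball v (c n) (r n).
have nestk : forall n k, B (n + k)%N `<=` B n.
  move=> n; elim=> [|k ih]; first by rewrite addn0.
  by rewrite addnS; apply: subset_trans ih; exact: nest.
have nestle : forall n m, (n <= m)%N -> B m `<=` B n.
  by move=> n m /subnKC <-; exact: nestk.
have cin : forall n, B n (c n).
  by move=> n; rewrite /B /vcball /= vdist_self.
have [[N HN]|H] := pselect (exists N, forall m, (N <= m)%N -> B m (c N)).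
  exists (c N) => m _.
  have [hNm|hmN] := leqP N m; first exact: HN.
  by apply: (nestle m N (ltnW hmN)); exact: cin.
have H' : forall N, exists mab : nat * (K * K),
    [/\ (N < mab.1)%N, mab.2.1 <= mab.2.2,
     B mab.1 `<=` [set x | mab.2.1 <= x <= mab.2.2] &
     (forall x, mab.2.1 <= x <= mab.2.2 -> B N x)].
  move=> N.
  have [m [hNm hm]] : exists m, (N <= m)%N /\ ~ B m (c N).
    apply: Classical_Prop.NNPP => hne; apply: H; exists N => m hm.
    apply: Classical_Prop.NNPP => hn; apply: hne; by exists m.
  have [a [b [hab [h1 h2]]]] :=
    @interval_between K R v hv (c N) (r N) (c m) (r m) (c N) (r0 m) (nestle _ _ hNm) (cin N) hm.
  exists (m, (a, b)); split => //=.
  rewrite ltn_neqAle hNm andbT; apply/eqP => e; apply: hm; rewrite -e.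
  exact: cin.
have [f Hf] := choice H'.
pose sig := fun k => iter k (fun n => (f n).1) 0%N.
have sigS : forall k, sig k.+1 = (f (sig k)).1 by [].
have sigk : forall k, (k <= sig k)%N.
  elim=> [|k ih] //; rewrite sigS; case: (Hf (sig k)) => h _ _ _.
  exact: leq_ltn_trans ih h.
pose a := fun k => (f (sig k)).2.1.
pose b := fun k => (f (sig k)).2.2.
have [x hx] : \bigcap_n `[a n, b n] !=set0.
  apply: hK.
  - by move=> n; case: (Hf (sig n)).
  - move=> n y /itv_cc hy; apply/itv_cc.
    case: (Hf (sig n)) => _ _ h3 _; apply: h3.
    rewrite -sigS; case: (Hf (sig n.+1)) => _ _ _ h4; exact: h4.
exists x => n _.
have /itv_cc hxn := hx n I.
case: (Hf (sig n)) => _ _ _ h4.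
exact: (nestle _ _ (sigk n)) (h4 x hxn).
Qed.
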